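(* Let $G=\overline{B(K_m,K_n)}$ and let $S$ be a semi-transitive orientation of $G$. Then every vertex $x$ of $G$ is of type A, type B, or type C with respect to the clique not containing $x$.
   Context: $\overline{B(K_m,K_n)}$ denotes a graph whose vertex set is the disjoint union of two cliques $K_m$ and $K_n$ (of sizes $m,n$) with arbitrary edges between them. An orientation is semi-transitive if it is acyclic and shortcut-free, where a shortcut is an induced subgraph on vertices $v_0,v_1,\dots,v_t$ ($t\ge 3$) such that $v_0\to v_1\to\cdots\to v_t$ is a directed path, $v_0\to v_t$ is an edge, and some pair $v_i,v_j$ is non-adjacent. Any acyclic orientation induces a transitive orientation on each clique; so for a clique $K$ with $l$ vertices there is a directed Hamiltonian path $\vec P=p_1\to p_2\to\cdots\to p_l$ with $p_i\to p_j$ iff $i<j$ ($p_1$ the source, $p_l$ the sink). For a vertex $x$ in one clique, let $K'$ be the other clique with path $p_1\to\cdots\to p_l$. Then $x$ is of type A if its neighbours in $K'$ form a (possibly empty) set of consecutive vertices $p_a,p_{a+1},\dots,p_b$ of $\vec P$ and all edges between $x$ and these are directed away from $x$; type B if the same holds with all these edges directed towards $x$; type C if there are $1\le s<t\le l$ such that the neighbours of $x$ in $K'$ are exactly $p_1,\dots,p_s$ and $p_t,\dots,p_l$, with $p_i\to x$ for $i\le s$ and $x\to p_i$ for $i\ge t$ (the middle group $p_{s+1},\dots,p_{t-1}$ of non-neighbours may be empty). For type C, $\{p_1,\dots,p_s\}$ is the source-group and $\{p_t,\dots,p_l\}$ the sink-group of $x$. *)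

(* Defs.v *)
From mathcomp Require Import all_boot.
Set Implicit Arguments. Unset Strict Implicit. Unset Printing Implicit Defensive.

(* Vertex set of B(K_m,K_n)-bar: disjoint union of 'I_m (clique K_m, inl)
   and 'I_n (clique K_n, inr). *)
Definition vert (m n : nat) : finType := ('I_m + 'I_n)%type.

Definition adjB (m n : nat) (E : 'I_m -> 'I_n -> bool) : rel (vert m n) :=
  fun u v =>
    match u, v with
    | inl i, inl j => i != j
    | inr i, inr j => i != j
    | inl i, inr j => E i j
    | inr j, inl i => E i j
    end.

Definition inK_m (m n : nat) (v : vert m n) : bool :=
  if v is inl _ then true else false.

Definition other_clique (m n : nat) (x : vert m n) : pred (vert m n) :=
  fun y => inK_m y != inK_m x.

Definition is_orientation (T : finType) (adj : rel T) (O : rel T) : Prop :=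
  forall u v, adj u v = (O u v || O v u) /\ ~~ (O u v && O v u).

Definition acyclic (T : finType) (O : rel T) : Prop :=
  forall x p, path O x p -> last x p = x -> p = [::].

Definition shortcut_free (T : finType) (adj : rel T) (O : rel T) : Prop :=
  forall x p, uniq (x :: p) -> 3 <= size p -> path O x p -> O x (last x p) ->
    forall u v, u \in x :: p -> v \in x :: p -> u != v -> adj u v.

Definition semi_transitive (T : finType) (adj : rel T) (O : rel T) : Prop :=
  acyclic O /\ shortcut_free adj O.

(* P = p_1 -> ... -> p_l is the directed Hamiltonian path of the clique K
   (membership predicate) under O: p_i -> p_j iff i < j. (0-based indices;
   d is an arbitrary default element for nth.) *)
Definition ham_path (T : finType) (O : rel T) (K : pred T) (d : T) (P : seq T)
  : Prop :=
  [/\ uniq P, (forall y, (y \in P) = K y) &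
      forall i j, i < size P -> j < size P ->
        O (nth d P i) (nth d P j) = (i < j)].

(* Type A: neighbours of x in P are a block p_a..p_b of consecutive vertices
   (possibly empty, a > b), all edges directed away from x. *)
Definition typeA (T : finType) (adj O : rel T) (x : T) (P : seq T) : Prop :=
  exists a b : nat, forall i, i < size P ->
    adj x (nth x P i) = (a <= i <= b) /\ (a <= i <= b -> O x (nth x P i)).

Definition typeB (T : finType) (adj O : rel T) (x : T) (P : seq T) : Prop :=
  exists a b : nat, forall i, i < size P ->
    adj x (nth x P i) = (a <= i <= b) /\ (a <= i <= b -> O (nth x P i) x).

(* Type C: (1-based) 1 <= s < t <= l, neighbours exactly p_1..p_s and
   p_t..p_l, p_i -> x for i <= s, x -> p_i for i >= t.
   In 0-based indices: source group i < s, sink group i >= t', where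
   s = s_paper, t' = t_paper - 1, so 0 < s <= t' < l. *)
Definition typeC (T : finType) (adj O : rel T) (x : T) (P : seq T) : Prop :=
  exists s t : nat, [/\ 0 < s, s <= t, t < size P &
    forall i, i < size P ->
      [/\ adj x (nth x P i) = (i < s) || (t <= i),
          i < s -> O (nth x P i) x &
          t <= i -> O x (nth x P i)]].

(* Main.v *)
Require Import Defs.
From mathcomp Require Import all_boot.
Set Implicit Arguments. Unset Strict Implicit.

Lemma O_irr (T : finType) (adj O : rel T) :
  is_orientation adj O -> forall u, O u u = false.
Proof. by move=> H u; have [_] := H u u; case: (O u u). Qed.

Lemma O_asym (T : finType) (adj O : rel T) :
  is_orientation adj O -> forall u v, O u v -> O v u = false.
Proof. by move=> H u v h; have [_] := H u v; rewrite h; case: (O v u). Qed.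

Lemma adjC (T : finType) (adj O : rel T) :
  is_orientation adj O -> forall u v, adj u v = adj v u.
Proof. by move=> H u v; rewrite (proj1 (H u v)) (proj1 (H v u)) orbC. Qed.

Lemma sc4 (T : finType) (adj O : rel T) :
  is_orientation adj O -> shortcut_free adj O ->
  forall a b c d, O a b -> O b c -> O c d -> O a d -> adj a c /\ adj b d.
Proof.
move=> Hor Hsf a b c d ab bc cd ad.
have ne : forall u v, O u v -> u != v.
  by move=> u v h; apply/eqP=> e; subst; rewrite (O_irr Hor) in h.
have ne2 : forall u v w, O u v -> O v w -> u != w.
  by move=> u v w h1 h2; apply/eqP=> e; subst; rewrite (O_asym Hor h1) in h2.
have Hu : uniq [:: a; b; c; d].
  rewrite /= !inE !negb_or (ne _ _ ab) (ne2 _ _ _ ab bc) (ne _ _ ad).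
  by rewrite (ne _ _ bc) (ne2 _ _ _ bc cd) (ne _ _ cd).
have Hp : path O a [:: b; c; d] by rewrite /= ab bc cd.
split.
- apply: (Hsf a [:: b; c; d] Hu erefl Hp ad); rewrite ?inE ?eqxx ?orbT //.
  exact: (ne2 _ _ _ ab bc).
- apply: (Hsf a [:: b; c; d] Hu erefl Hp ad); rewrite ?inE ?eqxx ?orbT //.
  exact: (ne2 _ _ _ bc cd).
Qed.

Lemma cyc3 (T : finType) (O : rel T) :
  acyclic O -> forall a b c, O a b -> O b c -> O c a -> False.
Proof.
by move=> H a b c ab bc ca; have := H a [:: b; c; a]; rewrite /= ab bc ca => /(_ erefl erefl).
Qed.

Theorem mainTheorem10 (m n : nat) (E : 'I_m -> 'I_n -> bool)
  (O : rel (vert m n)) :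
  is_orientation (adjB E) O ->
  semi_transitive (adjB E) O ->
  forall (x : vert m n) (P : seq (vert m n)),
    ham_path O (other_clique x) x P ->
    typeA (adjB E) O x P \/ typeB (adjB E) O x P \/ typeC (adjB E) O x P.
Proof.
move=> Hor [Hac Hsf] x P [Pu Pmem Pord].
set adj := adjB E.
have adjE : forall v, adj x v = O x v || O v x by move=> v; case: (Hor x v).
have nb : forall v, O x v -> O v x -> False.
  by move=> v h1 h2; rewrite (O_asym Hor h1) in h2.
pose inn i := (i < size P) && O (nth x P i) x.
pose out i := (i < size P) && O x (nth x P i).
have L1 : forall i k, inn i -> out k -> i < k.
  move=> i k /andP[il hi] /andP[kl hk]; case: (ltngtP i k) => // h.
    by case: (cyc3 Hac hk (_ : O (nth x P k) (nth x P i)) hi); rewrite Pord.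
  by subst; case: (nb _ hk hi).
have L2 : forall a b j, out a -> out b -> a < j < b -> adj x (nth x P j).
  move=> a b j /andP[al ha] /andP[bl hb] /andP[aj jb].
  have jl : j < size P by apply: ltn_trans bl.
  have [] := sc4 Hor Hsf (_ : O x (nth x P a)) (_ : O (nth x P a) (nth x P j))
    (_ : O (nth x P j) (nth x P b)) hb => //; by rewrite Pord.
have L2' : forall a b j, inn a -> inn b -> a < j < b -> adj x (nth x P j).
  move=> a b j /andP[al ha] /andP[bl hb] /andP[aj jb].
  have jl : j < size P by apply: ltn_trans bl.
  have [] := sc4 Hor Hsf (_ : O (nth x P a) (nth x P j))
    (_ : O (nth x P j) (nth x P b)) hb ha; rewrite ?Pord //.
  by move=> _; rewrite /adj (adjC Hor).
have L3 : forall i k j, inn i -> out k -> j < i -> adj x (nth x P j).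
  move=> i k j hi hk ji; have ik := L1 _ _ hi hk.
  move: hi hk => /andP[il hi] /andP[kl hk].
  have jl : j < size P by apply: ltn_trans il.
  have jk : j < k by apply: ltn_trans ik.
  have [] := sc4 Hor Hsf (_ : O (nth x P j) (nth x P i)) hi hk
    (_ : O (nth x P j) (nth x P k)); rewrite ?Pord //.
  by move=> h _; rewrite /adj (adjC Hor).
have L4 : forall i k j, inn i -> out k -> k < j -> j < size P ->
    adj x (nth x P j).
  move=> i k j hi hk kj jl; have ik := L1 _ _ hi hk.
  move: hi hk => /andP[il hi] /andP[kl hk].
  have ij : i < j by apply: ltn_trans kj.
  have [] := sc4 Hor Hsf hi hk (_ : O (nth x P k) (nth x P j))
    (_ : O (nth x P i) (nth x P j)); rewrite ?Pord //.
have inA : forall i, inn i -> adj x (nth x P i).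
  by move=> i /andP[_ h]; rewrite adjE h orbT.
have outA : forall i, out i -> adj x (nth x P i).
  by move=> i /andP[_ h]; rewrite adjE h.
have ubI : forall i, inn i -> i <= size P by move=> i /andP[/ltnW].
have ubO : forall i, out i -> i <= size P by move=> i /andP[/ltnW].
have adjIO : forall i, i < size P -> adj x (nth x P i) -> inn i \/ out i.
  by move=> i il; rewrite adjE /inn /out il => /orP[]; [right|left].
case: (boolP (has inn (iota 0 (size P)))) => [/hasP[i0 _ hi0] | noI];
case: (boolP (has out (iota 0 (size P)))) => [/hasP[k0 _ hk0] | noO].
-
  right; right.
  have exI : exists i, inn i by exists i0.
  have exO : exists i, out i by exists k0.
  case: (ex_maxnP exI ubI) => s hs maxs.
  case: (ex_minnP exO) => t ht mint.
  have st := L1 _ _ hs ht.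
  exists s.+1, t; split => //; first by case/andP: ht.
  move=> i il.
  have Hadj : adj x (nth x P i) = (i < s.+1) || (t <= i).
    apply/idP/idP.
      by case/(adjIO _ il) => h; [rewrite ltnS maxs | rewrite mint ?orbT].
    rewrite ltnS => /orP[]; rewrite leq_eqVlt => /orP[/eqP e|h].
    + by subst; apply: inA.
    + exact: L3 hs ht h.
    + by subst; apply: outA.
    + exact: L4 hs ht h il.
  split => //.
    move=> h; have: adj x (nth x P i) by rewrite Hadj h.
    case/(adjIO _ il) => /andP[_] // ho.
    have : t <= i by apply: mint; rewrite /out il.
    by rewrite leqNgt (leq_trans h st).
  move=> h; have: adj x (nth x P i) by rewrite Hadj h orbT.
  case/(adjIO _ il) => /andP[_] // ho.
  have : i <= s by apply: maxs; rewrite /inn il.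
  by rewrite leqNgt (leq_trans st h).
-
  right; left.
  have exI : exists i, inn i by exists i0.
  have noO' : forall i, out i -> False.
    move=> i hi; move/negP: noO; apply; apply/hasP; exists i => //.
    by rewrite mem_iota add0n; case/andP: hi.
  case: (ex_maxnP exI ubI) => b hb maxb.
  case: (ex_minnP exI) => a ha mina.
  exists a, b => i il.
  have Hadj : adj x (nth x P i) = (a <= i <= b).
    apply/idP/idP.
      by case/(adjIO _ il) => h; [rewrite mina ?maxb | case: (noO' _ h)].
    case/andP; rewrite leq_eqVlt => /orP[/eqP e|h].
      by subst => _; first [exact: inA ha | exact: outA ha].
    rewrite leq_eqVlt => /orP[/eqP e|h'].
      by subst; first [exact: inA hb | exact: outA hb].
    by apply: L2' ha hb _; rewrite h h'.
  rewrite Hadj; split => // h.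
  have: adj x (nth x P i) by rewrite Hadj.
  by case/(adjIO _ il) => [/andP[]//|/noO'].
-
  left.
  have exO : exists i, out i by exists k0.
  have noI' : forall i, inn i -> False.
    move=> i hi; move/negP: noI; apply; apply/hasP; exists i => //.
    by rewrite mem_iota add0n; case/andP: hi.
  case: (ex_maxnP exO ubO) => b hb maxb.
  case: (ex_minnP exO) => a ha mina.
  exists a, b => i il.
  have Hadj : adj x (nth x P i) = (a <= i <= b).
    apply/idP/idP.
      by case/(adjIO _ il) => h; [case: (noI' _ h) | rewrite mina ?maxb].
    case/andP; rewrite leq_eqVlt => /orP[/eqP e|h].
      by subst => _; first [exact: inA ha | exact: outA ha].
    rewrite leq_eqVlt => /orP[/eqP e|h'].
      by subst; first [exact: inA hb | exact: outA hb].
    by apply: L2 ha hb _; rewrite h h'.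
  rewrite Hadj; split => // h.
  have: adj x (nth x P i) by rewrite Hadj.
  by case/(adjIO _ il) => [/noI'|/andP[]//].
-
  left; exists 1, 0 => i il.
  have -> : (1 <= i <= 0) = false by case: i il.
  split => //; apply/negP => /(adjIO _ il) [] h.
    by move/negP: noI; apply; apply/hasP; exists i; rewrite ?mem_iota.
  by move/negP: noO; apply; apply/hasP; exists i; rewrite ?mem_iota.
Qed.
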